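(* Assume $r(x,y)>0$ for all distinct $x,y\in S$. For all $N$, $k\in\{0,1,\dots,N-1\}$ and $x\in S$, $$\mu_N(\mathcal C_N^S(x,k+1))\le\frac{R_2(k+d_N)(N-k)}{R_1(k+1)(N-k-1+d_N)}\,\mu_N(\mathcal C_N^S(x,k)),$$ where $\mathcal C_N^S(x,k)=\{\eta\in\mathcal H_N:\eta_x=k\}$, $R_1=\min\{r(a,b):a,b\in S,\ r(a,b)>0\}$ and $R_2=\max\{r(a,b):a,b\in S\}$.
   Context: $S$ is a finite set, $r:S\times S\to[0,\infty)$ with $r(x,x)=0$. $\mathcal H_N=\{\eta\in\{0,1,2,\dots\}^S:\sum_x\eta_x=N\}$; $\sigma^{x,y}\eta$ moves one particle from $x$ to $y$ (if $\eta_x\ge1$; else $\sigma^{x,y}\eta=\eta$). With $d_N>0$, the inclusion process is the continuous-time Markov chain on $\mathcal H_N$ with generator $(\mathcal L_NF)(\eta)=\sum_{x\ne y}\eta_x(d_N+\eta_y)r(x,y)\{F(\sigma^{x,y}\eta)-F(\eta)\}$, and $\mu_N$ is its unique invariant probability measure. *)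

(* Defs.v *)
From HB Require Import structures.
From mathcomp Require Import all_boot all_order all_algebra.
Set Implicit Arguments. Unset Strict Implicit. Unset Printing Implicit Defensive.
Import Order.TTheory GRing.Theory Num.Theory.
Local Open Scope ring_scope.

Section Inclusion.
Variables (R : realFieldType) (S : finType).

(* configurations: particle counts eta : S -> nat *)
Definition config := {ffun S -> nat}.

(* H_N, enumerated (without duplicates) as a sequence *)
Definition Hseq (N : nat) : seq config :=
  map (fun e : {ffun S -> 'I_N.+1} => [ffun z => nat_of_ord (e z)])
    (enum [pred e : {ffun S -> 'I_N.+1} |
             (\sum_(z : S) nat_of_ord (e z))%N == N]).

Definition sigma (x y : S) (eta : config) : config :=
  if (0 < eta x)%N then
    [ffun z => if z == x then (eta x).-1
               else if z == y then (eta y).+1 else eta z]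
  else eta.

Definition gen (dN : R) (r : S -> S -> R) (F : config -> R) (eta : config) : R :=
  \sum_(x : S) \sum_(y : S | y != x)
     (eta x)%:R * (dN + (eta y)%:R) * r x y * (F (sigma x y eta) - F eta).

Definition invariant_prob (N : nat) (dN : R) (r : S -> S -> R)
    (mu : config -> R) : Prop :=
  [/\ forall eta, eta \in Hseq N -> 0 <= mu eta,
      \sum_(eta <- Hseq N) mu eta = 1 &
      forall F : config -> R, \sum_(eta <- Hseq N) mu eta * gen dN r F eta = 0].

Definition muC (N : nat) (mu : config -> R) (x : S) (k : nat) : R :=
  \sum_(eta <- Hseq N | eta x == k) mu eta.

(* R_2 = max_{a,b} r(a,b)  (r >= 0 and r(a,a) = 0, so 0 is a valid seed) *)
Definition R2 (r : S -> S -> R) : R :=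
  \big[Num.max/0]_(ab : S * S) r ab.1 ab.2.

(* R_1 = min{ r(a,b) : r(a,b) > 0 }; the seed R2 is >= every r(a,b), so this
   is the true minimum whenever some r(a,b) > 0 *)
Definition R1 (r : S -> S -> R) : R :=
  \big[Num.min/R2 r]_(ab : S * S | 0 < r ab.1 ab.2) r ab.1 ab.2.

End Inclusion.

(* Main.v *)
Require Import Defs.
From HB Require Import structures.
From mathcomp Require Import all_boot all_order all_algebra.
From mathcomp Require Import zify ring lra.
Import Order.TTheory GRing.Theory Num.Theory.
Local Open Scope ring_scope.

Section Aux.
Variables (R : realFieldType) (S : finType) (r : S -> S -> R).

Lemma R2_ge a b : r a b <= R2 r.
Proof.
rewrite /R2 (bigD1 (a, b)) //=.
by rewrite le_max lexx.
Qed.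

Lemma R1_le {a b} : 0 < r a b -> R1 r <= r a b.
Proof.
move=> h; rewrite /R1 (bigD1 (a, b)) //=.
by rewrite ge_min lexx.
Qed.

Lemma R1_gt0 {a b} : 0 < r a b -> 0 < R1 r.
Proof.
move=> h; rewrite /R1; apply: (big_ind (fun v => 0 < v)).
- exact: lt_le_trans h (R2_ge a b).
- by move=> u v hu hv; rewrite lt_min hu hv.
- by move=> [i j].
Qed.

Lemma Hseq_sum {N} {e : config S} : e \in Hseq S N -> (\sum_z e z)%N = N.
Proof.
case/mapP=> f; rewrite mem_enum inE => /eqP hf ->.
rewrite -[RHS]hf. apply eq_bigr => z _. by rewrite ffunE.
Qed.

Lemma L1 (z : S) (f : S -> R) :
  \sum_a \sum_(b | b != a) (if b == z then f a else 0) = \sum_(a | a != z) f a.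
Proof.
rewrite [RHS]big_mkcond; apply: eq_bigr => a _.
case: (a =P z) => [->|ne].
  by rewrite big1 // => b /negPf ->.
rewrite (bigD1 z) /=; last by apply/eqP => h; apply: ne.
rewrite eqxx big1 ?addr0 // => b /andP [_ /negPf ->] //.
Qed.

Lemma L2 (z : S) (g : S -> R) :
  \sum_a \sum_(b | b != a) (if a == z then g b else 0) = \sum_(b | b != z) g b.
Proof.
rewrite (bigD1 z) //= eqxx [X in _ + X]big1 ?addr0 //.
by move=> a /negPf ->; rewrite big1.
Qed.

Definition Fk (z : S) (k : nat) : config S -> R :=
  fun e => if (k < e z)%N then 1 else 0.

Lemma term (d : R) (z : S) (k : nat) a b (e : config S) :
  0 < d -> 0 < r a b -> a != b ->
  (e a)%:R * (d + (e b)%:R) * r a b * (Fk z k (sigma a b e) - Fk z k e) <=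
  (if b == z then (if e z == k then R2 r * (k%:R + d) * (e a)%:R else 0) else 0)
  - (if a == z then (if e z == k.+1 then R1 r * k.+1%:R * (d + (e b)%:R) else 0) else 0).
Proof.
move=> hd hr nab.
have h1 := R1_le hr; have h2 := R2_ge a b.
have hR1 := R1_gt0 hr.
have eb0 : 0 <= (e b)%:R :> R by [].
have ea0 : 0 <= (e a)%:R :> R by [].
rewrite /sigma /Fk; case: (ltnP 0 (e a)) => Ha; last first.
  have -> : e a = 0%N by lia.
  rewrite !mul0r.
  case: (a =P z) => [<-|naz].
    have -> : (b == a) = false by apply/negbTE; rewrite eq_sym.
    have -> : (e a == k.+1) = false by apply/negbTE; lia.
    by rewrite subr0.
  rewrite subr0; case: (b == z) => //; case: (e z == k) => //.
  by rewrite mulr0.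
rewrite ffunE.
case: (a =P z) => [<-|naz].
  have -> : (b == a) = false by apply/negbTE; rewrite eq_sym.
  rewrite eqxx sub0r.
  case: (e a =P k.+1) => [->|hne].
    rewrite /= ltnn ltnSn.
    have hc : 0 <= k.+1%:R * (d + (e b)%:R) :> R.
      by apply: mulr_ge0 => //; lra.
    have := ler_wpM2l hc h1; lra.
  have -> : (k < (e a).-1)%N = (k < e a)%N.
    by apply/idP/idP => H; lia.
  by rewrite subrr mulr0 oppr0.
have -> : (z == a) = false by apply/negbTE; rewrite eq_sym; apply/eqP => h; apply: naz.
rewrite subr0.
case: (b =P z) => [<-|nbz]; last first.
  have -> : (z == b) = false by apply/negbTE; rewrite eq_sym; apply/eqP.
  by rewrite subrr mulr0.
rewrite eqxx.
case: (e b =P k) => [->|hne].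
  rewrite ltnSn ltnn subr0 mulr1.
  have hc : 0 <= (e a)%:R * (d + k%:R) :> R.
    by apply: mulr_ge0 => //; have : 0 <= k%:R :> R by []; lra.
  have := ler_wpM2l hc h2; lra.
have -> : (k < (e b).+1)%N = (k < e b)%N.
  by apply/idP/idP => H; lia.
by rewrite subrr mulr0.
Qed.

Lemma gen_bound (d : R) (z : S) (k N : nat) (e : config S) :
  0 < d -> (forall x y, x != y -> 0 < r x y) -> (1 < #|S|)%N ->
  e \in Hseq S N -> (k < N)%N ->
  gen d r (Fk z k) e <=
  (if e z == k then R2 r * (k%:R + d) * (N - k)%:R else 0)
  - (if e z == k.+1 then R1 r * k.+1%:R * ((N - k - 1)%:R + d) else 0).
Proof.
move=> hd hr hS he hk.
have [y hyz] : exists y, y != z.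
  case/card_gt1P: hS => u [v [_ _ huv]].
  case: (u =P z) => [euz|nuz]; last by exists u; apply/eqP.
  by exists v; rewrite -euz eq_sym.
have hR1 : 0 < R1 r := R1_gt0 (hr _ _ hyz).
rewrite /gen.
set G1 := fun a b => (if b == z then (if e z == k then R2 r * (k%:R + d) * (e a)%:R else 0) else 0).
set G2 := fun a b => (if a == z then (if e z == k.+1 then R1 r * k.+1%:R * (d + (e b)%:R) else 0) else 0).
apply: le_trans (_ : \sum_a \sum_(b | b != a) (G1 a b - G2 a b) <= _).
  apply: ler_sum => a _; apply: ler_sum => b hb.
  by apply: term => //; [apply: hr; rewrite eq_sym | rewrite eq_sym].
under eq_bigr do rewrite sumrB.
rewrite sumrB /G1 /G2 L1 L2.
have hsumN := Hseq_sum he.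
have hrest : (\sum_(a | a != z) e a = N - e z)%N.
  have h := hsumN; rewrite (bigD1 z) //= in h; lia.
have hrestR : \sum_(a | a != z) (e a)%:R = (N - e z)%:R :> R.
  by rewrite -hrest natr_sum.
case: (e z =P k) => [ezk|nezk].
  have -> : (e z == k.+1) = false by rewrite ezk; apply/negbTE; lia.
  rewrite [X in _ - X]big1 // subr0 -mulr_sumr hrestR ezk.
  by rewrite subr0.
rewrite big1 // sub0r.
case: (e z =P k.+1) => [ezk|nezk1]; last first.
  by rewrite big1 //; lra.
rewrite sub0r lerN2 -mulr_sumr big_split /= hrestR ezk.
apply: ler_wpM2l.
  by apply: mulr_ge0; [apply: ltW | ].
have -> : (N - k.+1)%N = (N - k - 1)%N by lia.
rewrite addrC lerD2l.
rewrite (bigD1 y) //= lerDl.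
by apply: sumr_ge0 => i _; apply: ltW.
Qed.

End Aux.
Theorem lemma7p5 (R : realFieldType) (S : finType) (r : S -> S -> R)
    (d : nat -> R) :
  (1 < #|S|)%N ->
  (forall x, r x x = 0) ->
  (forall x y, x != y -> 0 < r x y) ->
  (forall N, 0 < d N) ->
  forall (N : nat) (mu : config S -> R),
    invariant_prob N (d N) r mu ->
    forall (k : nat), (k < N)%N -> forall x : S,
      muC N mu x k.+1 <=
        (R2 r * (k%:R + d N) * (N - k)%:R)
          / (R1 r * k.+1%:R * ((N - k - 1)%:R + d N))
        * muC N mu x k.
Proof.
move=> hS hrr hr hd N mu [hpos hsum hinv] k hk x.
have [y hyx] : exists y, y != x.
  case/card_gt1P: hS => u [v [_ _ huv]].
  case: (u =P x) => [eux|nux]; last by exists u; apply/eqP.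
  by exists v; rewrite -eux eq_sym.
have hR1 : 0 < R1 r := @R1_gt0 R S r y x (hr _ _ hyx).
set A := R1 r * k.+1%:R * ((N - k - 1)%:R + d N).
set B := R2 r * (k%:R + d N) * (N - k)%:R.
have hA : 0 < A.
  rewrite /A; apply: mulr_gt0; last by have := hd N; have : 0 <= (N - k - 1)%:R :> R by []; lra.
  by apply: mulr_gt0 => //; rewrite ltr0n.
have h0 := hinv (Fk R S x k).
have key : \sum_(e <- Hseq S N) mu e * gen (d N) r (Fk R S x k) e <=
   \sum_(e <- Hseq S N) (B * (if e x == k then mu e else 0)
                          - A * (if e x == k.+1 then mu e else 0)).
  rewrite big_seq [X in _ <= X]big_seq; apply: ler_sum => e he.
  apply: le_trans (ler_wpM2l (hpos _ he) (@gen_bound R S r (d N) x k N e (hd N) hr hS he hk)) _.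
  rewrite -/A -/B.
  case: (e x == k); case: (e x == k.+1); lra.
rewrite h0 sumrB -!mulr_sumr -!big_mkcond in key.
rewrite mulrAC ler_pdivlMr //.
rewrite /muC; lra.
Qed.
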